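(* Let $G_1,G_2$ be non-trivial countable amenable ICC groups and let $\nu$ be the probability measure on $G_1\times G_2$ of the construction described in the context. Then for $j=1,2$ the measure $\mathrm{pr}_j(\nu)$ on $G_j$ is Liouville, i.e. the Poisson–Furstenberg boundary $\partial(G_j,\mathrm{pr}_j(\nu))$ is trivial.
   Context: Notation: $B^n$ is the set of products of $n$ elements of $B$; a finite nonempty $F\subseteq G$ is $(A,\delta)$-invariant if $|AF\setminus F|<\delta|F|$; for finite $A\subseteq G$, $b\in G$ is an $A$-switcher if $A\cap AbA=\varnothing$ and $a'_1ba'_2=a''_1ba''_2$ with $a'_1,a'_2,a''_1,a''_2\in A$ implies $a'_1=a''_1$, $a'_2=a''_2$ (switchers exist for every finite set in a non-trivial ICC group). Construction: fix an enumeration $(c_{1,i},c_{2,i})_{i\in\mathbb N}$ of all elements of $G_1\times G_2$. Set $A_{j,1}=\{1_{G_j}\}$. For $i\ge1$, $j\in\{1,2\}$, $\bar j=3-j$: let $F_{j,i}\subseteq G_j$ be $(A_{j,i}^{i+1},1/i)$-invariant; let $S_{j,i}\subseteq G_j$ be any set with $|S_{j,i}|=|F_{\bar j,i}|$; let $b'_{j,i}$ be an $(A_{j,i}\cup S_{j,i}\cup F_{j,i})^{i+2}$-switcher; let $b''_{j,i}$ be an $(A_{j,i}\cup S_{j,i}\cup F_{j,i}\cup\{b'_{j,i}\})^{2i+8}$-switcher; let $A_{j,i+1}=A_{j,i}\cup F_{j,i}b'_{j,i}S_{j,i}b''_{j,i}\cup\{c_{j,i}\}$. Fix bijections $\psi_{j,i}:F_{\bar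 j,i}\to S_{j,i}$. Let $K$ be $\mathbb N$-valued with $\Pr(K=k)=k^{-5/4}/c$, and given $K$ let $Y$ be ''red'' with probability $2^{-K}$ and ''blue'' otherwise. Given $K=k$: if $Y$ is red, $X=(c_{1,k},c_{2,k})$; if $Y$ is blue, pick $f_1\in F_{1,k}$, $f_2\in F_{2,k}$ uniformly and independently and set $X=(f_1b'_{1,k}\psi_{1,k}(f_2)b''_{1,k},\ f_2b'_{2,k}\psi_{2,k}(f_1)b''_{2,k})$. Then $\nu$ is the law of $X$. The Poisson–Furstenberg boundary is the space of ergodic components of the shift on trajectories of the random walk; it is trivial if its $\sigma$-algebra is trivial mod 0. *)

(* Defs.v *)
From HB Require Import structures.
From mathcomp Require Import all_boot all_order all_algebra.
From mathcomp Require Import finmap.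
From mathcomp Require Import all_classical all_reals all_analysis.

Set Implicit Arguments.
Unset Strict Implicit.
Unset Printing Implicit Defensive.

Import Order.TTheory GRing.Theory Num.Theory.
Import numFieldNormedType.Exports.
Local Open Scope ring_scope.

Record grp_ops (G : Type) := GrpOps {
  gmul : G -> G -> G;
  gone : G;
  ginv : G -> G }.

Definition is_group (G : Type) (o : grp_ops G) : Prop :=
  (forall x y z, gmul o x (gmul o y z) = gmul o (gmul o x y) z) /\
  (forall x, gmul o (gone o) x = x) /\
  (forall x, gmul o x (gone o) = x) /\
  (forall x, gmul o (ginv o x) x = gone o) /\
  (forall x, gmul o x (ginv o x) = gone o).

Definition nontrivial_grp (G : Type) (o : grp_ops G) : Prop :=
  exists g : G, g <> gone o.

Definition ICC (G : Type) (o : grp_ops G) : Prop :=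
  forall g : G, g <> gone o ->
    ~ finite_set [set gmul o (gmul o h g) (ginv o h) | h in [set: G]]%classic.

Definition amenable (R : realType) (G : Type) (o : grp_ops G) : Prop :=
  exists m : set G -> R,
    m [set: G]%classic = 1 /\
    (forall A, 0 <= m A) /\
    (forall A B, (A `&` B = set0)%classic -> m (A `|` B)%classic = m A + m B) /\
    (forall g A, m [set gmul o g x | x in A]%classic = m A).

Local Open Scope fset_scope.

Definition fsmul (G : choiceType) (o : grp_ops G) (A B : {fset G}) : {fset G} :=
  [fset gmul o x y | x in A, y in B].

Fixpoint fspow (G : choiceType) (o : grp_ops G) (B : {fset G}) (n : nat)
  : {fset G} :=
  match n with
  | 0 => [fset gone o]
  | n'.+1 => fsmul o (fspow o B n') B
  end.

Definition invariant (R : realType) (G : choiceType) (o : grp_ops G)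
  (A : {fset G}) (delta : R) (F : {fset G}) : Prop :=
  F != fset0 /\ ((#|` (fsmul o A F `\` F)|)%:R < delta * (#|` F|)%:R)%R.

Definition switcher (G : choiceType) (o : grp_ops G) (A : {fset G}) (b : G)
  : Prop :=
  A `&` fsmul o (fsmul o A [fset b]) A = fset0 /\
  (forall a1 a2 a1' a2', a1 \in A -> a2 \in A -> a1' \in A -> a2' \in A ->
     gmul o (gmul o a1 b) a2 = gmul o (gmul o a1' b) a2' ->
     a1 = a1' /\ a2 = a2').

(* One side (j) of the construction, for i >= 1.  [c] is i |-> c_{j,i},
   [Fp] is the partner sequence F_{jbar,i}, [psi i] : F_{jbar,i} -> S_{j,i}
   is a bijection. *)
Definition construction_side (R : realType) (G G' : choiceType)
  (o : grp_ops G) (c : nat -> G)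
  (A F S : nat -> {fset G}) (Fp : nat -> {fset G'})
  (b1 b2 : nat -> G) (psi : nat -> G' -> G) : Prop :=
  A 1%N = [fset gone o] /\
  forall i : nat, (1 <= i)%N ->
    invariant o (fspow o (A i) i.+1) ((i%:R)^-1 : R) (F i) /\
    #|` S i| = #|` Fp i| /\
    switcher o (fspow o (A i `|` S i `|` F i) (i + 2)) (b1 i) /\
    switcher o (fspow o (A i `|` S i `|` F i `|` [fset b1 i]) (2 * i + 8))
      (b2 i) /\
    A i.+1 = A i `|` fsmul o (fsmul o (fsmul o (F i) [fset b1 i]) (S i))
                              [fset b2 i] `|` [fset c i] /\
    (forall x, x \in Fp i -> psi i x \in S i) /\
    (forall x y, x \in Fp i -> y \in Fp i -> psi i x = psi i y -> x = y) /\
    (forall s, s \in S i -> exists2 x, x \in Fp i & psi i x = s).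

Local Close Scope fset_scope.

Local Open Scope ring_scope.

Definition norm_const (R : realType) : R :=
  limn (fun n => \sum_(1 <= k < n) ((k%:R : R) `^ (- (5%:R / 4%:R)))).

Definition weightK (R : realType) (k : nat) : R :=
  ((k%:R : R) `^ (- (5%:R / 4%:R))) / norm_const R.

(* k-th term of E[phi(X_1)] given K = k, weighted by the colour:
   red (prob 2^-k): X_1 = c_{1,k};
   blue: X_1 = f1 b'_{1,k} psi_{1,k}(f2) b''_{1,k}, f_i uniform in F_{i,k}. *)
Definition cond_term (R : realType) (G G' : choiceType) (o : grp_ops G)
  (c : nat -> G) (F : nat -> {fset G}) (Fp : nat -> {fset G'})
  (b1 b2 : nat -> G) (psi : nat -> G' -> G) (phi : G -> R) (k : nat) : R :=
  (2%:R ^- k) * phi (c k) +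
  (1 - 2%:R ^- k) *
    ((\sum_(f1 <- F k) \sum_(f2 <- Fp k)
        phi (gmul o (gmul o (gmul o f1 (b1 k)) (psi k f2)) (b2 k)))
     / ((#|` F k|)%:R * (#|` Fp k|)%:R)).

(* E[phi(X_j)] = \int phi d(pr_j nu), as the (convergent) series over k >= 1;
   [expect_proj ... phi e] means this expectation equals e. *)
Definition expect_proj_is (R : realType) (G G' : choiceType) (o : grp_ops G)
  (c : nat -> G) (F : nat -> {fset G}) (Fp : nat -> {fset G'})
  (b1 b2 : nat -> G) (psi : nat -> G' -> G) (phi : G -> R) (e : R) : Prop :=
  ((fun n => \sum_(1 <= k < n) (weightK R k * cond_term o c F Fp b1 b2 psi phi k))
    @ \oo --> e)%classic.

Definition liouville_proj (R : realType) (G G' : choiceType) (o : grp_ops G)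
  (c : nat -> G) (F : nat -> {fset G}) (Fp : nat -> {fset G'})
  (b1 b2 : nat -> G) (psi : nat -> G' -> G) : Prop :=
  forall f : G -> R,
    (exists M : R, forall g, `|f g| <= M) ->
    (forall g, expect_proj_is o c F Fp b1 b2 psi (fun x => f (gmul o g x)) (f g)) ->
    forall g h, f g = f h.

(* Main.v *)
Require Import Defs.
From HB Require Import structures.
From mathcomp Require Import all_boot all_order all_algebra.
From mathcomp Require Import finmap.
From mathcomp Require Import all_classical all_reals all_analysis.
From mathcomp Require Import ring lra zify.

Set Implicit Arguments.
Unset Strict Implicit.
Unset Printing Implicit Defensive.
Import Order.TTheory GRing.Theory Num.Theory.
Import numFieldNormedType.Exports.
Local Open Scope ring_scope.

Local Open Scope fset_scope.
Lemma mem_fsmul (G : choiceType) (o : grp_ops G) (A B : {fset G}) x y :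
  x \in A -> y \in B -> gmul o x y \in fsmul o A B.
Proof. move=> xA yB; rewrite /fsmul; exact: (in_imfset2 _ (fun x y => gmul o x y) xA yB). Qed.

Lemma fsmulP (G : choiceType) (o : grp_ops G) (A B : {fset G}) z :
  z \in fsmul o A B -> exists x y, [/\ x \in A, y \in B & z = gmul o x y].
Proof. by move=> /imfset2P[x xA [y yB ->]]; exists x, y. Qed.

Lemma fspow_mono (G : choiceType) (o : grp_ops G) (A B : {fset G}) n x :
  {subset A <= B} -> x \in fspow o A n -> x \in fspow o B n.
Proof.
move=> AB; elim: n x => [|n IH] x //= /fsmulP[y [z [yP zA ->]]].
by apply: mem_fsmul; [apply: IH|apply: AB].
Qed.

Lemma fspowS (G : choiceType) (o : grp_ops G) (grp : is_group o) (A : {fset G}) n x :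
  gone o \in A -> x \in fspow o A n -> x \in fspow o A n.+1.
Proof.
move: grp => [_ [_ [h1 _]]] oA xP /=; rewrite -(h1 x); exact: mem_fsmul.
Qed.

Lemma fspow_le (G : choiceType) (o : grp_ops G) (grp : is_group o) (A : {fset G}) n m x :
  gone o \in A -> (n <= m)%N -> x \in fspow o A n -> x \in fspow o A m.
Proof.
move=> oA; elim: m => [|m IH]; first by rewrite leqn0 => /eqP->.
rewrite leq_eqVlt => /orP[/eqP->//|]; rewrite ltnS => nm xP.
exact: fspowS (IH nm xP).
Qed.

Lemma fspow1 (G : choiceType) (o : grp_ops G) (grp : is_group o) (A : {fset G}) x :
  x \in A -> x \in fspow o A 1.
Proof.
move: grp => [_ [h1 _]] xA /=; rewrite -(h1 x); apply: mem_fsmul => //.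
by rewrite in_fset1.
Qed.

Lemma fspow_one (G : choiceType) (o : grp_ops G) (grp : is_group o) (A : {fset G}) :
  gone o \in A -> gone o \in fspow o A 1.
Proof. by move=> h; apply: fspow1. Qed.

Local Close Scope fset_scope.

Local Open Scope fset_scope.
Lemma side_Asub (R : realType) (G G' : choiceType) (o : grp_ops G) (c : nat -> G)
  (A F S : nat -> {fset G}) (Fp : nat -> {fset G'}) (b1 b2 : nat -> G) (psi : nat -> G' -> G) :
  construction_side R o c A F S Fp b1 b2 psi ->
  forall i, (1 <= i)%N -> {subset A i <= A i.+1}.
Proof.
move=> [_ side] i i1 x xA; have [_ [_ [_ [_ [-> _]]]]] := side i i1.
by rewrite !in_fsetU xA.
Qed.

Lemma side_Amono (R : realType) (G G' : choiceType) (o : grp_ops G) (c : nat -> G)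
  (A F S : nat -> {fset G}) (Fp : nat -> {fset G'}) (b1 b2 : nat -> G) (psi : nat -> G' -> G) :
  construction_side R o c A F S Fp b1 b2 psi ->
  forall j k, (1 <= j)%N -> (j <= k)%N -> {subset A j <= A k}.
Proof.
move=> side j k j1; elim: k => [|k IH]; first by rewrite leqn0 => /eqP jk; rewrite jk in j1.
rewrite leq_eqVlt => /orP[/eqP->//|]; rewrite ltnS => jk x xA.
apply: (side_Asub side); last exact: IH.
exact: leq_trans jk.
Qed.

Lemma side_one (R : realType) (G G' : choiceType) (o : grp_ops G) (c : nat -> G)
  (A F S : nat -> {fset G}) (Fp : nat -> {fset G'}) (b1 b2 : nat -> G) (psi : nat -> G' -> G) :
  construction_side R o c A F S Fp b1 b2 psi ->
  forall i, (1 <= i)%N -> gone o \in A i.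
Proof.
move=> side i i1; apply: (side_Amono side (leqnn 1) i1).
by case: side => -> _; rewrite in_fset1.
Qed.

Lemma side_c (R : realType) (G G' : choiceType) (o : grp_ops G) (c : nat -> G)
  (A F S : nat -> {fset G}) (Fp : nat -> {fset G'}) (b1 b2 : nat -> G) (psi : nat -> G' -> G) :
  construction_side R o c A F S Fp b1 b2 psi ->
  forall i, (1 <= i)%N -> c i \in A i.+1.
Proof.
move=> [_ side] i i1; have [_ [_ [_ [_ [-> _]]]]] := side i i1.
by rewrite !in_fsetU in_fset1 eqxx !orbT.
Qed.

Lemma side_blue (R : realType) (G G' : choiceType) (o : grp_ops G) (c : nat -> G)
  (A F S : nat -> {fset G}) (Fp : nat -> {fset G'}) (b1 b2 : nat -> G) (psi : nat -> G' -> G) :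
  construction_side R o c A F S Fp b1 b2 psi ->
  forall i f1 f2, (1 <= i)%N -> f1 \in F i -> f2 \in Fp i ->
  gmul o (gmul o (gmul o f1 (b1 i)) (psi i f2)) (b2 i) \in A i.+1.
Proof.
move=> [_ side] i f1 f2 i1 f1F f2F; have [_ [_ [_ [_ [-> [hpsi _]]]]]] := side i i1.
rewrite !in_fsetU; apply/orP; left; apply/orP; right.
apply: mem_fsmul; last by rewrite in_fset1.
apply: mem_fsmul; last exact: hpsi.
by apply: mem_fsmul; last by rewrite in_fset1.
Qed.

Lemma side_inv (R : realType) (G G' : choiceType) (o : grp_ops G) (c : nat -> G)
  (A F S : nat -> {fset G}) (Fp : nat -> {fset G'}) (b1 b2 : nat -> G) (psi : nat -> G' -> G) :
  construction_side R o c A F S Fp b1 b2 psi ->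
  forall i, (1 <= i)%N -> Defs.invariant o (fspow o (A i) i.+1) ((i%:R)^-1 : R) (F i).
Proof. by move=> [_ side] i i1; have [] := side i i1. Qed.

Local Close Scope fset_scope.

Local Open Scope fset_scope.
Lemma norm_sum_seq_le (R : realType) (T : Type) (s : seq T) (phi : T -> R) K :
  (forall x, `|phi x| <= K) -> `|\sum_(i <- s) phi i| <= (size s)%:R * K.
Proof.
move=> hK; elim: s => [|x s IH]; first by rewrite big_nil normr0 mul0r.
rewrite big_cons /= (le_trans (ler_normD _ _))// -add1n natrD mulrDl mul1r.
exact: lerD.
Qed.

Lemma sum_diff_fset (R : realType) (T : choiceType) (X Y : {fset T}) (phi : T -> R) K :
  (forall x, `|phi x| <= K) -> #|` X| = #|` Y| ->
  `|\sum_(x <- X) phi x - \sum_(y <- Y) phi y| <= (#|` X `\` Y|)%:R * K *+ 2.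
Proof.
move=> hK cXY.
rewrite (big_fsetID _ (mem Y)) (big_fsetID _ (mem X) Y) /=.
have -> : \sum_(i <- [fset x | x in X & x \in Y]) phi i =
          \sum_(i <- [fset x | x in Y & x \in X]) phi i.
  by apply: eq_fbigl => x; rewrite !inE andbC.
rewrite addrC opprD addrA addrK.
have c1 : #|` [fset x | x in X & ~~ (x \in Y)]| = #|` X `\` Y|.
  by congr (size (enum_fset _)); apply/fsetP => x; rewrite !inE andbC.
have c2 : #|` [fset x | x in Y & ~~ (x \in X)]| = #|` X `\` Y|.
  have -> : #|` [fset x | x in Y & ~~ (x \in X)]| = #|` Y `\` X|.
    by congr (size (enum_fset _)); apply/fsetP => x; rewrite !inE andbC.
  by rewrite !cardfsD cXY fsetIC.
rewrite (le_trans (ler_normB _ _))// mulr2n.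
apply: lerD.
  by rewrite -c1; apply: norm_sum_seq_le.
by rewrite -c2; apply: norm_sum_seq_le.
Qed.

Local Close Scope fset_scope.

Local Open Scope fset_scope.
Lemma gmul_linj (G : Type) (o : grp_ops G) (grp : is_group o) u x y :
  gmul o u x = gmul o u y -> x = y.
Proof.
move: grp => [ha [h1 [_ [hv _]]]] e.
by rewrite -(h1 x) -(h1 y) -(hv u) -!ha e.
Qed.

Lemma shift_sum (R : realType) (G : choiceType) (o : grp_ops G) (grp : is_group o)
  (F : {fset G}) u (phi : G -> R) K :
  (forall x, `|phi x| <= K) ->
  `|\sum_(x <- F) phi (gmul o u x) - \sum_(x <- F) phi x| <=
     (#|` [fset gmul o u x | x in F] `\` F|)%:R * K *+ 2.
Proof.
move=> hK.
have inj : {in mem F &, injective (gmul o u)} by move=> x y _ _; apply: gmul_linj.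
have -> : \sum_(x <- F) phi (gmul o u x) = \sum_(y <- [fset gmul o u x | x in F]) phi y.
  by rewrite big_imfset.
apply: sum_diff_fset => //.
by rewrite card_in_imfset.
Qed.

Local Close Scope fset_scope.

Lemma div_bound (R : realType) (X D b : R) :
  0 <= D -> 0 <= b -> `|X| <= D * b -> `|X / D| <= b.
Proof.
move=> D0 b0; have [->|Dn0] := eqVneq D 0; first by rewrite invr0 mulr0 normr0.
have Dp : 0 < D by rewrite lt_def Dn0 D0.
by move=> h; rewrite normrM normfV (ger0_norm D0) ler_pdivrMr // mulrC.
Qed.

Lemma conv_bound (R : realType) (t a b al ga : R) :
  0 <= t <= 1 -> `|a| <= al -> `|b| <= ga -> `|t * a + (1 - t) * b| <= t * al + (1 - t) * ga.
Proof.
move=> /andP[t0 t1] ha hb; rewrite (le_trans (ler_normD _ _))//.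
have t1' : 0 <= 1 - t by rewrite subr_ge0.
rewrite !normrM (ger0_norm t0) (ger0_norm t1').
by apply: lerD; apply: ler_wpM2l.
Qed.

Lemma norm_sum_mem_le (R : realType) (T : eqType) (s : seq T) (h : T -> R) b :
  (forall x, x \in s -> `|h x| <= b) -> `|\sum_(x <- s) h x| <= (size s)%:R * b.
Proof.
elim: s => [|x s IH] hb; first by rewrite big_nil normr0 mul0r.
rewrite big_cons /= (le_trans (ler_normD _ _))// -add1n natrD mulrDl mul1r.
apply: lerD; first by apply: hb; rewrite in_cons eqxx.
by apply: IH => y ys; apply: hb; rewrite in_cons ys orbT.
Qed.

Lemma norm_sum_fset_le (R : realType) (T : choiceType) (X : {fset T}) (h : T -> R) b :
  (forall x, x \in X -> `|h x| <= b) -> `|\sum_(x <- X) h x| <= (#|` X|)%:R * b.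
Proof. by move=> hb; apply: norm_sum_mem_le. Qed.

Lemma inv_shift (R : realType) (G : choiceType) (o : grp_ops G) (B F : {fset G}) (d : R) u :
  Defs.invariant o B d F -> u \in B ->
  (#|` ([fset gmul o u x | x in F] `\` F)%fset|)%:R <= d * (#|` F|)%:R.
Proof.
move=> [_ hlt] uB; apply: le_trans (ltW hlt); rewrite ler_nat.
apply: fsubset_leq_card; apply/fsubsetP => y; rewrite !in_fsetD => /andP[-> /=].
by move=> /imfsetP[x xF ->]; apply: mem_fsmul.
Qed.

Lemma pow2_le (R : realType) (k : nat) : (1 <= k)%N -> (2%:R ^- k : R) <= k%:R^-1.
Proof.
move=> k1; rewrite lef_pV2 ?posrE ?exprn_gt0 ?ltr0n //.
by rewrite -natrX ler_nat ltnW // ltn_expl.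
Qed.

Lemma t_bounds (R : realType) (k : nat) : 0 <= (2%:R ^- k : R) <= 1.
Proof.
rewrite invr_ge0 exprn_ge0 ?ler0n //= invf_le1 ?exprn_gt0 ?ltr0n //.
by rewrite exprn_ege1 // ler1n.
Qed.

Lemma cond_split (R : realType) (G G' : choiceType) (o : grp_ops G)
  (c : nat -> G) (F : nat -> {fset G}) (Fp : nat -> {fset G'})
  (b1 b2 : nat -> G) (psi : nat -> G' -> G) (phi1 phi2 : G -> R) (k : nat) :
  cond_term o c F Fp b1 b2 psi phi1 k - cond_term o c F Fp b1 b2 psi phi2 k =
  2%:R ^- k * (phi1 (c k) - phi2 (c k)) + (1 - 2%:R ^- k) *
   ((\sum_(f1 <- F k) \sum_(f2 <- Fp k)
        phi1 (gmul o (gmul o (gmul o f1 (b1 k)) (psi k f2)) (b2 k)) -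
     \sum_(f1 <- F k) \sum_(f2 <- Fp k)
        phi2 (gmul o (gmul o (gmul o f1 (b1 k)) (psi k f2)) (b2 k)))
     / ((#|` F k|)%:R * (#|` Fp k|)%:R)).
Proof. rewrite /cond_term mulrBl; ring. Qed.

Lemma cond_small (R : realType) (G G' : choiceType) (o : grp_ops G)
  (c : nat -> G) (A F S : nat -> {fset G}) (Fp : nat -> {fset G'})
  (b1 b2 : nat -> G) (psi : nat -> G' -> G) (phi1 phi2 : G -> R) (k : nat) (b : R) :
  construction_side R o c A F S Fp b1 b2 psi -> (1 <= k)%N -> 0 <= b ->
  (forall y, y \in A k.+1 -> `|phi1 y - phi2 y| <= b) ->
  `|cond_term o c F Fp b1 b2 psi phi1 k - cond_term o c F Fp b1 b2 psi phi2 k| <= b.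
Proof.
move=> side k1 b0 hb; rewrite cond_split.
have -> : b = 2%:R ^- k * b + (1 - 2%:R ^- k) * b by ring.
apply: conv_bound; first exact: t_bounds.
  by apply: hb; apply: (side_c side).
apply: div_bound; [by rewrite mulr_ge0 ?ler0n|done|].
rewrite -sumrB.
under eq_bigr do rewrite -sumrB.
rewrite -mulrA; apply: norm_sum_fset_le => f1 f1F.
apply: norm_sum_fset_le => f2 f2F.
by apply: hb; apply: (side_blue side).
Qed.

Lemma cond_big (R : realType) (G G' : choiceType) (o : grp_ops G) (grp : is_group o)
  (c : nat -> G) (A F S : nat -> {fset G}) (Fp : nat -> {fset G'})
  (b1 b2 : nat -> G) (psi : nat -> G' -> G) (h : G -> R) (u v : G) (k : nat) (M : R) :
  construction_side R o c A F S Fp b1 b2 psi -> (1 <= k)%N ->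
  (forall y, `|h y| <= M) ->
  u \in fspow o (A k) k.+1 -> v \in fspow o (A k) k.+1 ->
  `|cond_term o c F Fp b1 b2 psi (fun x => h (gmul o u x)) k -
    cond_term o c F Fp b1 b2 psi (fun x => h (gmul o v x)) k| <= 6%:R * M / k%:R.
Proof.
move=> side k1 hM uA vA; rewrite cond_split.
have M0 : 0 <= M by apply: le_trans (hM u).
have kp : 0 < (k%:R : R) by rewrite ltr0n.
have ha : forall x y z, gmul o x (gmul o y z) = gmul o (gmul o x y) z by case: grp.
pose Psi y := \sum_(f2 <- Fp k) h (gmul o (gmul o (gmul o y (b1 k)) (psi k f2)) (b2 k)).
have hPsi : forall y, `|Psi y| <= (#|` Fp k|)%:R * M.
  by move=> y; apply: norm_sum_fset_le => x _.
have E : forall w, \sum_(f1 <- F k) \sum_(f2 <- Fp k)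
     h (gmul o w (gmul o (gmul o (gmul o f1 (b1 k)) (psi k f2)) (b2 k))) =
     \sum_(f1 <- F k) Psi (gmul o w f1).
  by move=> w; apply: eq_bigr => f1 _; apply: eq_bigr => f2 _; rewrite !ha.
rewrite !E.
have inv := side_inv side k1.
have sh : forall w, w \in fspow o (A k) k.+1 ->
   `|\sum_(f1 <- F k) Psi (gmul o w f1) - \sum_(f1 <- F k) Psi f1| <=
   k%:R^-1 * (#|` F k|)%:R * ((#|` Fp k|)%:R * M) *+ 2.
  move=> w wA; apply: le_trans (shift_sum grp _ _ hPsi) _.
  rewrite lerMn2r /=; apply: ler_wpM2r; first by rewrite mulr_ge0 ?ler0n.
  exact: inv_shift inv wA.
have t1 := t_bounds R k.
apply: (@le_trans _ _ (2%:R ^- k * (M *+ 2) + (1 - 2%:R ^- k) * (4%:R * M / k%:R))).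
  apply: conv_bound => //.
    by rewrite (le_trans (ler_normB _ _))// mulr2n lerD.
  apply: div_bound; [by rewrite mulr_ge0 ?ler0n| by rewrite divr_ge0 ?mulr_ge0 ?ler0n|].
  have -> : \sum_(f1 <- F k) Psi (gmul o u f1) - \sum_(f1 <- F k) Psi (gmul o v f1) =
     (\sum_(f1 <- F k) Psi (gmul o u f1) - \sum_(f1 <- F k) Psi f1) -
     (\sum_(f1 <- F k) Psi (gmul o v f1) - \sum_(f1 <- F k) Psi f1).
    by rewrite opprB addrA subrK.
  rewrite (le_trans (ler_normB _ _))//.
  apply: le_trans (lerD (sh _ uA) (sh _ vA)) _.
  rewrite -mulr2n -mulrnA /= le_eqVlt; apply/orP; left; apply/eqP.
  clear E sh hPsi inv.
  move: (#|` F k|%:R) (#|` Fp k|%:R) (k%:R : R) => x y z.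
  rewrite -mulr_natr; ring.
have := pow2_le R k1; move: t1 => /andP[t0 t1] tk.
have h1 : 2%:R ^- k * (M *+ 2) <= k%:R^-1 * (M *+ 2) by apply: ler_wpM2r => //; rewrite mulrn_wge0.
have h2 : (1 - 2%:R ^- k) * (4%:R * M / k%:R) <= 4%:R * M / k%:R.
  by rewrite ler_piMl ?divr_ge0 ?mulr_ge0 ?ler0n // lerBlDr lerDl.
apply: le_trans (lerD h1 h2) _; rewrite le_eqVlt; apply/orP; left; apply/eqP.
clear h1 h2.
move: (k%:R : R) => z; rewrite -mulr_natr; ring.
Qed.

Lemma lim_bound (R : realType) (u v : nat -> R) (a b bb : R) :
  (u @ \oo --> a)%classic -> (v @ \oo --> b)%classic ->
  (forall n, `|u n - v n| <= bb) -> `|a - b| <= bb.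
Proof.
move=> ua vb h.
have : ((fun n => `|u n - v n|) @ \oo --> `|a - b|)%classic.
  by apply: cvg_norm; apply: cvgB.
move/cvgr_to_le; apply; exact: nearW.
Qed.

Lemma powR_quarter (R : realType) (x : R) : 0 <= x -> (x `^ (4%:R^-1)) ^+ 4 = x.
Proof.
move=> x0; rewrite -powR_mulrn ?powR_ge0 // -powRrM mulVf ?pnatr_eq0 //.
exact: powRr1.
Qed.

Lemma powR_54 (R : realType) (x : R) : 0 <= x ->
  x `^ (- (5%:R / 4%:R)) = ((x `^ (4%:R^-1)) ^+ 5)^-1.
Proof.
by move=> x0; rewrite powRN mulrC powRrM powR_mulrn // powR_ge0.
Qed.

Lemma powR_14 (R : realType) (x : R) : 0 <= x ->
  x `^ (- (4%:R^-1)) = (x `^ (4%:R^-1))^-1.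
Proof. by move=> x0; rewrite powRN. Qed.

Lemma key_ineq (R : realType) (x y : R) : 0 < x -> 0 < y -> x ^+ 4 = y ^+ 4 + 1 ->
  (x ^+ 5)^-1 <= 4%:R * (y^-1 - x^-1).
Proof.
move=> x0 y0 e.
have yx : y <= x.
  rewrite leNgt; apply/negP => xy.
  have : x ^+ 4 < y ^+ 4 by rewrite ltrXn2r // ?nnegrE ?(ltW y0) ?(ltW x0).
  by rewrite e; lra.
have h1 : (x - y) * (x ^+ 3 + x ^+ 2 * y + x * y ^+ 2 + y ^+ 3) = 1.
  have : x ^+ 4 - y ^+ 4 = 1 by rewrite e; ring.
  by move=> <-; ring.
have h2 : x ^+ 2 * y <= x ^+ 3 by rewrite [x ^+ 3]exprSr; apply: ler_wpM2l; rewrite ?exprn_ge0 ?(ltW x0).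
have h3 : x * y ^+ 2 <= x ^+ 3.
  rewrite [x ^+ 3]exprS; apply: ler_wpM2l; first exact: ltW.
  by rewrite ler_pXn2r ?nnegrE ?(ltW x0) ?(ltW y0).
have h4 : y ^+ 3 <= x ^+ 3 by rewrite ler_pXn2r ?nnegrE ?(ltW x0) ?(ltW y0) //.
have h5 : 1 <= (x - y) * (4%:R * x ^+ 3).
  have hs : x ^+ 3 + x ^+ 2 * y + x * y ^+ 2 + y ^+ 3 <= 4%:R * x ^+ 3.
    move: h2 h3 h4; move: (x ^+ 3) (x ^+ 2 * y) (x * y ^+ 2) (y ^+ 3) => a b c d.
    lra.
  have := ler_wpM2l (_ : 0 <= x - y) hs; rewrite h1; apply.
  by rewrite subr_ge0.
have h6 : y <= 4%:R * x ^+ 4 * (x - y).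
  apply: le_trans yx _.
  have : x * 1 <= x * ((x - y) * (4%:R * x ^+ 3)) by apply: ler_wpM2l; rewrite ?(ltW x0).
  by rewrite mulr1 => /le_trans; apply; rewrite le_eqVlt; apply/orP; left; apply/eqP; ring.
have -> : 4%:R * (y^-1 - x^-1) = (x ^+ 5)^-1 + (4%:R * x ^+ 4 * (x - y) - y) / (x ^+ 5 * y).
  field; by rewrite ?gt_eqF ?exprn_gt0 // ?mulr_gt0 ?exprn_gt0.
by rewrite lerDl divr_ge0 ?subr_ge0 // mulr_ge0 ?exprn_ge0 ?(ltW x0) ?(ltW y0).
Qed.

Definition tt (R : realType) (k : nat) : R := (k%:R : R) `^ (- (5%:R / 4%:R)).
Definition ss (R : realType) (n : nat) : R := \sum_(1 <= k < n) tt R k.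

Lemma tt_ge0 (R : realType) k : 0 <= tt R k.
Proof. exact: powR_ge0. Qed.

Lemma tt_tele (R : realType) (k : nat) : (1 <= k)%N ->
  tt R k.+1 <= 4%:R * ((k%:R : R) `^ (- (4%:R^-1)) - (k.+1%:R : R) `^ (- (4%:R^-1))).
Proof.
move=> k1; rewrite /tt powR_54 // !powR_14 //.
apply: key_ineq; rewrite ?powR_gt0 ?ltr0n //.
by rewrite !powR_quarter // natr1.
Qed.

Lemma ss_bound (R : realType) n :
  ss R n.+2 <= 5%:R - 4%:R * (n.+1%:R : R) `^ (- (4%:R^-1)).
Proof.
elim: n => [|n IH].
  by rewrite /ss big_nat1 /tt !powR1 mulr1; lra.
rewrite /ss big_nat_recr //= -/(ss R n.+2).
have := tt_tele R (ltn0Sn n); lra.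
Qed.

Lemma ss_le5 (R : realType) n : ss R n <= 5%:R.
Proof.
case: n => [|[|n]]; first by rewrite /ss big_geq.
  by rewrite /ss big_geq.
apply: le_trans (ss_bound R n) _.
by rewrite lerBlDr lerDl mulr_ge0 ?powR_ge0.
Qed.

Lemma ss_nd (R : realType) : {homo ss R : m n / (m <= n)%N >-> m <= n}.
Proof.
move=> m n mn; case: m mn => [|m] mn.
  by rewrite {1}/ss big_geq // sumr_ge0 // => i _; exact: tt_ge0.
rewrite /ss (@big_cat_nat _ _ _ m.+1 1 n) //= lerDl.
by rewrite sumr_ge0 // => i _; exact: tt_ge0.
Qed.

Lemma ss_cvg (R : realType) : cvgn (ss R).
Proof.
apply: nondecreasing_is_cvgn; first exact: ss_nd.
by exists 5%:R => _ [n _ <-]; exact: ss_le5.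
Qed.

Lemma norm_constE (R : realType) : norm_const R = limn (ss R).
Proof. by []. Qed.

Lemma ss_le_c (R : realType) n : ss R n <= norm_const R.
Proof. rewrite norm_constE; apply: nondecreasing_cvgn_le; [exact: ss_nd | exact: ss_cvg]. Qed.

Lemma c_ge1 (R : realType) : 1 <= norm_const R.
Proof.
apply: le_trans (ss_le_c R 2).
by rewrite /ss big_nat1 /tt powR1.
Qed.

Definition WS (R : realType) (a b : nat) : R := \sum_(a <= k < b) weightK R k.

Lemma c_gt0 (R : realType) : 0 < norm_const R.
Proof. exact: lt_le_trans ltr01 (c_ge1 R). Qed.

Lemma w_ge0 (R : realType) k : 0 <= weightK R k.
Proof. by rewrite divr_ge0 ?powR_ge0 // ltW // c_gt0. Qed.

Lemma WS_ge0 (R : realType) a b : 0 <= WS R a b.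
Proof. by rewrite sumr_ge0 // => i _; exact: w_ge0. Qed.

Lemma WS1_le1 (R : realType) n : WS R 1 n <= 1.
Proof.
rewrite /WS -mulr_suml -/(ss R n) ler_pdivrMr ?c_gt0 // mul1r.
exact: ss_le_c.
Qed.

Lemma WS_split (R : realType) a b n : (a <= b)%N -> (b <= n)%N ->
  WS R a n = WS R a b + WS R b n.
Proof. by move=> ab bn; rewrite /WS (big_cat_nat ab bn). Qed.

Lemma WS_tail (R : realType) j n : (1 <= j)%N -> WS R j n <= 1 - WS R 1 j.
Proof.
move=> j1; have [nj|jn] := leqP n j.
  by rewrite /WS big_geq // subr_ge0 WS1_le1.
rewrite lerBrDl -(WS_split R j1 (ltnW jn)); exact: WS1_le1.
Qed.

Lemma tt_anti (R : realType) (a b : nat) : (0 < a)%N -> (a <= b)%N -> tt R b <= tt R a.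
Proof.
move=> a0 ab; rewrite /tt !powR_54 ?ler0n //.
have ha : 0 < (a%:R : R) `^ (4%:R^-1) by rewrite powR_gt0 // ltr0n.
have hb : (a%:R : R) `^ (4%:R^-1) <= (b%:R : R) `^ (4%:R^-1).
  by apply: ge0_ler_powR; rewrite ?nnegrE ?ler0n ?invr_ge0 ?ler0n // ler_nat.
rewrite lef_pV2 ?posrE ?exprn_gt0 //; last exact: lt_le_trans ha hb.
by rewrite ler_pXn2r // nnegrE ltW // (lt_le_trans ha hb).
Qed.

Lemma WS_lower (R : realType) j : (0 < j)%N ->
  (j%:R * tt R (2 * j)) / norm_const R <= WS R j (2 * j).
Proof.
move=> j0; rewrite /WS -mulr_suml ler_pM2r ?invr_gt0 ?c_gt0 //.
have -> : (j%:R : R) * tt R (2 * j) = \sum_(j <= k < 2 * j) tt R (2 * j).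
  by rewrite sumr_const_nat mulr_natl; congr (_ *+ _); rewrite mul2n -addnn addnK.
apply: ler_sum_nat => k /andP[jk k2j]; apply: tt_anti.
  exact: leq_trans j0 jk.
exact: ltnW.
Qed.

Lemma pow4_quarter (R : realType) (x : R) : 0 <= x -> (x ^+ 4) `^ (4%:R^-1) = x.
Proof.
move=> x0; rewrite -powR_mulrn // -powRrM mulfV ?pnatr_eq0 //; exact: powRr1.
Qed.

Lemma tt_special (R : realType) (N : nat) : tt R (2 * (8 * N ^ 4)) = ((2 * N)%:R ^+ 5)^-1.
Proof.
rewrite /tt powR_54 ?ler0n //; congr (_ ^+ _)^-1.
have -> : ((2 * (8 * N ^ 4))%:R : R) = ((2 * N)%:R) ^+ 4.
  by rewrite -natrX; congr (_%:R); rewrite expnMn; lia.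
by rewrite pow4_quarter ?ler0n.
Qed.

Lemma step_bound (R : realType) (G G' : choiceType) (o : grp_ops G) (grp : is_group o)
  (c : nat -> G) (A F S : nat -> {fset G}) (Fp : nat -> {fset G'})
  (b1 b2 : nat -> G) (psi : nat -> G' -> G)
  (side : construction_side R o c A F S Fp b1 b2 psi)
  (f : G -> R) (M : R) (hM : forall x, `|f x| <= M)
  (harm : forall g, expect_proj_is o c F Fp b1 b2 psi (fun x => f (gmul o g x)) (f g))
  (j r : nat) (bt : R) (j1 : (1 <= j)%N) (bt0 : 0 <= bt)
  (hyp : forall g u v, u \in fspow o (A j) r.+1 -> v \in fspow o (A j) r.+1 ->
           `|f (gmul o g u) - f (gmul o g v)| <= bt) :
  forall g u v, u \in fspow o (A j) r -> v \in fspow o (A j) r ->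
  `|f (gmul o g u) - f (gmul o g v)| <=
    WS R 1 j * bt + (1 - WS R 1 j) *
      (6%:R * M / j%:R + (if (j + 2 <= r)%N then M *+ 2 else 0)).
Proof.
move=> g u v uA vA.
have M0 : 0 <= M by apply: le_trans (hM g).
have ha : forall x y z, gmul o x (gmul o y z) = gmul o (gmul o x y) z by case: grp.
set C := 6%:R * M / j%:R + (if (j + 2 <= r)%N then M *+ 2 else 0).
have C0 : 0 <= C.
  by rewrite /C addr_ge0 ?divr_ge0 ?mulr_ge0 ?ler0n //; case: ifP => _ //; rewrite mulrn_wge0.
pose e k : R := if (k < j)%N then bt else C.
have e0 : forall k, 0 <= e k by move=> k; rewrite /e; case: ifP.
have hk : forall k, (1 <= k)%N ->
  `|cond_term o c F Fp b1 b2 psi (fun x => f (gmul o (gmul o g u) x)) k -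
    cond_term o c F Fp b1 b2 psi (fun x => f (gmul o (gmul o g v) x)) k| <= e k.
  move=> k k1; rewrite /e; case: ltnP => kj.
    apply: (cond_small side) => // y yA; rewrite -!ha; apply: hyp.
      by apply: mem_fsmul => //; apply: (side_Amono side _ kj).
    by apply: mem_fsmul => //; apply: (side_Amono side _ kj).
  have [rk|kr] := leqP r k.+1.
    have subk : forall w, w \in fspow o (A j) r -> w \in fspow o (A k) k.+1.
      move=> w wA; apply: (fspow_le grp (side_one side k1) rk).
      by apply: fspow_mono wA; apply: (side_Amono side j1 kj).
    have -> : (fun x => f (gmul o (gmul o g u) x)) = (fun x => (fun y => f (gmul o g y)) (gmul o u x)).
      by apply: funext => x; rewrite ha.
    have -> : (fun x => f (gmul o (gmul o g v) x)) = (fun x => (fun y => f (gmul o g y)) (gmul o v x)).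
      by apply: funext => x; rewrite ha.
    apply: le_trans (cond_big grp side k1 (fun y => hM _) (subk _ uA) (subk _ vA)) _.
    have Cge : 6%:R * M / j%:R <= C.
      by rewrite /C lerDl; case: ifP => _ //; rewrite mulrn_wge0.
    apply: le_trans Cge; apply: ler_wpM2l; first by rewrite mulr_ge0 ?ler0n.
    by rewrite lef_pV2 ?posrE ?ltr0n // ler_nat.
  apply: (cond_small side) => // y _.
  have jr : (j + 2 <= r)%N by rewrite addn2; apply: leq_ltn_trans kr; rewrite ltnS.
  have h2M : M *+ 2 <= C by rewrite /C jr lerDr divr_ge0 ?mulr_ge0 ?ler0n.
  apply: le_trans (ler_normB _ _) (le_trans _ h2M); by rewrite mulr2n lerD.
apply: lim_bound (harm (gmul o g u)) (harm (gmul o g v)) _ => n /=.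
rewrite -sumrB; apply: le_trans (ler_norm_sum _ _ _) _.
apply: (@le_trans _ _ (\sum_(1 <= k < n) weightK R k * e k)).
  apply: ler_sum_nat => k /andP[k1 _].
  rewrite -mulrBr normrM ger0_norm ?w_ge0 //; apply: ler_wpM2l; first exact: w_ge0.
  exact: hk.
have we0 : forall k, 0 <= weightK R k * e k by move=> k; rewrite mulr_ge0 ?w_ge0.
rewrite (big_nat_widen 1 n (maxn n j)) ?leq_maxl //.
apply: (@le_trans _ _ (\sum_(1 <= k < maxn n j) weightK R k * e k)).
  rewrite [X in _ <= X](bigID (fun i => (i < n)%N)) /= lerDl.
  by rewrite sumr_ge0.
rewrite (@big_cat_nat _ _ _ j) ?leq_maxr //.
have -> : \sum_(1 <= k < j) weightK R k * e k = WS R 1 j * bt.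
  rewrite /WS mulr_suml; apply: eq_big_nat => k /andP[_ kj].
  by rewrite /e kj.
have -> : \sum_(j <= k < maxn n j) weightK R k * e k = WS R j (maxn n j) * C.
  rewrite /WS mulr_suml; apply: eq_big_nat => k /andP[jk _].
  by rewrite /e ltnNge jk.
rewrite lerD2l; apply: ler_wpM2r => //; exact: WS_tail.
Qed.

Lemma iter_bound (R : realType) (G G' : choiceType) (o : grp_ops G) (grp : is_group o)
  (c : nat -> G) (A F S : nat -> {fset G}) (Fp : nat -> {fset G'})
  (b1 b2 : nat -> G) (psi : nat -> G' -> G)
  (side : construction_side R o c A F S Fp b1 b2 psi)
  (f : G -> R) (M : R) (hM : forall x, `|f x| <= M)
  (harm : forall g, expect_proj_is o c F Fp b1 b2 psi (fun x => f (gmul o g x)) (f g))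
  (j : nat) (j1 : (1 <= j)%N) :
  forall n r g u v, u \in fspow o (A j) r -> v \in fspow o (A j) r ->
  `|f (gmul o g u) - f (gmul o g v)| <=
    M *+ 2 * WS R 1 j ^+ n + 6%:R * M / j%:R + M *+ 2 * WS R 1 j ^+ (j + 2 - r).
Proof.
have M0 : 0 <= M by apply: le_trans (hM (gone o)).
have p0 := WS_ge0 R 1 j; have p1 := WS1_le1 R j.
have c0 : 0 <= 6%:R * M / j%:R by rewrite divr_ge0 ?mulr_ge0 ?ler0n.
elim=> [|n IH] r g u v uA vA.
  rewrite expr0 mulr1; apply: le_trans (ler_normB _ _) _.
  apply: (@le_trans _ _ (M *+ 2)); first by rewrite mulr2n lerD.
  by rewrite -addrA lerDl addr_ge0 ?mulr_ge0 ?exprn_ge0 ?mulrn_wge0.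
have bt0 : 0 <= M *+ 2 * WS R 1 j ^+ n + 6%:R * M / j%:R + M *+ 2 * WS R 1 j ^+ (j + 2 - r.+1).
  by rewrite !addr_ge0 ?mulr_ge0 ?exprn_ge0 ?mulrn_wge0.
have := @step_bound R G G' o grp c A F S Fp b1 b2 psi side f M hM harm j r _ j1 bt0 (IH r.+1) g u v uA vA.
move=> /le_trans; apply.
move: (WS R 1 j) p0 p1 => p p0 p1.
move: (6%:R * M / j%:R) c0 => C c0.
case: ifP => jr.
  have -> : (j + 2 - r.+1)%N = 0%N by lia.
  have -> : (j + 2 - r)%N = 0%N by lia.
  rewrite le_eqVlt; apply/orP; left; apply/eqP; rewrite exprS; ring.
have -> : (j + 2 - r)%N = (j + 2 - r.+1).+1%N by lia.
rewrite le_eqVlt; apply/orP; left; apply/eqP; rewrite !exprS; ring.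
Qed.

Lemma bernoulli (R : realType) (p : R) n : 0 <= p <= 1 ->
  p ^+ n * (1 + n%:R * (1 - p)) <= 1.
Proof.
move=> /andP[p0 p1]; elim: n => [|n IH]; first by rewrite expr0 mul0r addr0 mulr1.
have e : p ^+ n.+1 * (1 + n.+1%:R * (1 - p)) =
         p * (p ^+ n * (1 + n%:R * (1 - p))) + p ^+ n.+1 * (1 - p).
  by rewrite -natr1 exprS; ring.
rewrite e.
have h1 : p * (p ^+ n * (1 + n%:R * (1 - p))) <= p by rewrite ler_piMr.
have h2 : p ^+ n.+1 * (1 - p) <= 1 - p.
  by rewrite ler_piMl ?subr_ge0 // exprn_ile1.
lra.
Qed.

Lemma archi_zero (R : realType) (d K : R) (N0 : nat) :
  (forall N : nat, (N0 <= N)%N -> (1 <= N)%N -> `|d| <= K / N%:R) -> d = 0.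
Proof.
move=> h; apply/eqP; apply/negPn/negP => dn0.
have dp : 0 < `|d| by rewrite normr_gt0.
have K0 : 0 <= K.
  have := h (maxn N0 1) (leq_maxl _ _) (leq_maxr _ _).
  rewrite ler_pdivlMr ?ltr0n ?leq_maxr // => hh.
  by apply: le_trans hh; rewrite mulr_ge0.
pose N := maxn (maxn N0 1) (Num.Def.trunc (K / `|d|)).+1.
have := h N (leq_trans (leq_maxl _ _) (leq_maxl _ _)) (leq_trans (leq_maxr _ _) (leq_maxl _ _)).
have Np : 0 < (N%:R : R) by rewrite ltr0n /N; lia.
have hN : K / `|d| < N%:R.
  apply: lt_le_trans (truncnS_gt _) _; rewrite ler_nat; exact: leq_maxr.
rewrite ler_pdivlMr // => hh.
move: hN; rewrite ltr_pdivrMr // => hN.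
have : `|d| * N%:R < `|d| * N%:R by apply: le_lt_trans hh _; rewrite mulrC.
by rewrite ltxx.
Qed.

Lemma numbers (R : realType) (N j : nat) (p cc M d : R) :
  (1 <= N)%N -> j = (8 * N ^ 4)%N -> 0 < cc -> 0 <= M -> 0 <= p <= 1 ->
  j%:R * tt R (2 * j) / cc <= 1 - p ->
  p ^+ j * (1 + j%:R * (1 - p)) <= 1 ->
  d <= M *+ 2 * p ^+ (j + 1) + 6%:R * M / j%:R + M *+ 2 * p ^+ (j + 1) ->
  d <= (4%:R * M * cc + M) / N%:R.
Proof.
move=> N1 jE c0 M0 /andP[p0 p1] hq bern hd.
have x1 : 1 <= (N%:R : R) by rewrite ler1n.
have x0 : 0 < (N%:R : R) by apply: lt_le_trans x1.
have jR : (j%:R : R) = 8%:R * N%:R ^+ 4 by rewrite jE natrM natrX.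
have j0 : 0 < (j%:R : R) by rewrite jR mulr_gt0 ?ltr0n ?exprn_gt0.
have jj : (N%:R : R) <= j%:R * (j%:R * tt R (2 * j)).
  rewrite {3}jE tt_special jR natrM.
  have -> : 8%:R * N%:R ^+ 4 * (8%:R * N%:R ^+ 4 * (((2%:R : R) * N%:R) ^+ 5)^-1) =
            2%:R * (N%:R : R) ^+ 3.
    by field; rewrite gt_eqF.
  move: x1; move: (N%:R : R) => x x1; nra.
have pj0 : 0 <= p ^+ j by rewrite exprn_ge0.
have A1 : p ^+ j * (j%:R * (1 - p)) <= 1.
  by move: bern; rewrite mulrDr mulr1 => h; apply: le_trans _ h; rewrite lerDr.
have A2 : N%:R / cc <= j%:R * (1 - p).
  apply: le_trans (ler_wpM2l (ltW j0) hq).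
  rewrite mulrA ler_pM2r ?invr_gt0 //.
have A3 : p ^+ j * (N%:R / cc) <= 1 by apply: le_trans (ler_wpM2l pj0 A2) A1.
have A4 : p ^+ j <= cc / N%:R.
  by rewrite ler_pdivlMr //; move: A3; rewrite mulrA ler_pdivrMr // mul1r.
have A5 : p ^+ (j + 1) <= cc / N%:R.
  by apply: le_trans A4; rewrite addn1 exprS ler_piMl.
have A6 : 6%:R * M / j%:R <= M / N%:R.
  rewrite ler_pdivrMr // jR.
  have -> : M / N%:R * (8%:R * N%:R ^+ 4) = 8%:R * M * N%:R ^+ 3.
    by field; rewrite gt_eqF.
  have x3 : 1 <= (N%:R : R) ^+ 3 by rewrite exprn_ege1.
  move: x3; move: (N%:R ^+ 3 : R) => y y1; nra.
have A7 : M *+ 2 * p ^+ (j + 1) <= M *+ 2 * (cc / N%:R).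
  by apply: ler_wpM2l; rewrite ?mulrn_wge0.
have -> : (4%:R * M * cc + M) / N%:R = M *+ 2 * (cc / N%:R) + M / N%:R + M *+ 2 * (cc / N%:R).
  by rewrite -mulr_natr; field; rewrite gt_eqF.
apply: le_trans hd _; apply: lerD; [apply: lerD|] => //.
Qed.

Lemma side_liouville (R : realType) (G G' : choiceType) (o : grp_ops G) (grp : is_group o)
  (c : nat -> G) (A F S : nat -> {fset G}) (Fp : nat -> {fset G'})
  (b1 b2 : nat -> G) (psi : nat -> G' -> G)
  (side : construction_side R o c A F S Fp b1 b2 psi)
  (surj : forall a : G, exists m, (1 <= m)%N /\ c m = a) :
  liouville_proj R o c F Fp b1 b2 psi.
Proof.
move=> f [M hM] harm.
have M0 : 0 <= M by apply: le_trans (hM (gone o)).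
have [ha [h1l [h1r [hvl hvr]]]] := grp.
have key : forall g a, f (gmul o g a) = f g.
  move=> g a; have [m [m1 cm]] := surj a.
  apply/eqP; rewrite -subr_eq0; apply/eqP.
  apply: (@archi_zero _ _ (4%:R * M * norm_const R + M) m.+1) => N hN N1.
  pose j := (8 * N ^ 4)%N.
  have N4 : (N <= N ^ 4)%N by rewrite -{1}(expn1 N) leq_pexp2l.
  have jm : (m.+1 <= j)%N by rewrite /j; lia.
  have j1 : (1 <= j)%N by lia.
  have aA : a \in A j by rewrite -cm; apply: (side_Amono side _ jm) => //; exact: (side_c side).
  have hb := @iter_bound R G G' o grp c A F S Fp b1 b2 psi side f M hM harm j j1 (j + 1) 1 g a (gone o)
     (fspow1 grp aA) (fspow1 grp (side_one side j1)).
  rewrite h1r (_ : (j + 2 - 1)%N = (j + 1)%N) in hb; last by lia.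
  apply: (numbers N1 erefl (c_gt0 R) M0 _ _ _ hb).
  - by rewrite WS_ge0 WS1_le1.
  - apply: le_trans (WS_lower R j1) _; exact: WS_tail.
  - by apply: bernoulli; rewrite WS_ge0 WS1_le1.
move=> g h.
have -> : h = gmul o g (gmul o (ginv o g) h) by rewrite ha hvr h1l.
by rewrite key.
Qed.

Unset Implicit Arguments.
Set Strict Implicit.
Local Close Scope ring_scope.

Theorem mainTheorem8 (R : realType)
  (G1 G2 : countType) (o1 : grp_ops G1) (o2 : grp_ops G2)
  (grp1 : is_group o1) (grp2 : is_group o2)
  (ntr1 : nontrivial_grp o1) (ntr2 : nontrivial_grp o2)
  (am1 : amenable R o1) (am2 : amenable R o2)
  (icc1 : ICC o1) (icc2 : ICC o2)
  (c : nat -> G1 * G2)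
  (c_enum : forall x : G1 * G2, exists i : nat, (1 <= i)%N /\ c i = x /\
              forall i', (1 <= i')%N -> c i' = x -> i' = i)
  (A1 F1 S1 : nat -> {fset G1}) (b1' b1'' : nat -> G1) (psi1 : nat -> G2 -> G1)
  (A2 F2 S2 : nat -> {fset G2}) (b2' b2'' : nat -> G2) (psi2 : nat -> G1 -> G2)
  (side1 : construction_side R o1 (fun i => (c i).1) A1 F1 S1 F2 b1' b1'' psi1)
  (side2 : construction_side R o2 (fun i => (c i).2) A2 F2 S2 F1 b2' b2'' psi2) :
  liouville_proj R o1 (fun i => (c i).1) F1 F2 b1' b1'' psi1 /\
  liouville_proj R o2 (fun i => (c i).2) F2 F1 b2' b2'' psi2.
Proof.
split.
- apply: (side_liouville grp1 side1) => a.
  have [i [i1 [ci _]]] := c_enum (a, gone o2).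
  by exists i; rewrite ci.
- apply: (side_liouville grp2 side2) => a.
  have [i [i1 [ci _]]] := c_enum (gone o1, a).
  by exists i; rewrite ci.
Qed.
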